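(* Let $a>-1$, $C>0$ and $c>0$ be constants. Let $g:[0,1]\to\mathbb{R}$ be a function of the form $g(x)=\sum_{n=1}^\infty g_nx^n$ with $|g_n|\le Cn^a$ for all $n\ge1$. Let $P\ge1$ and let $\hat x_1,\dots,\hat x_P$ be the Chebyshev nodes of the first kind shifted and scaled to the interval $[0,1/(1+c)]$, i.e. $\hat x_i=\frac{1+\cos\left(\frac{(2i-1)\pi}{2P}\right)}{2(1+c)}$. Let $\epsilon>0$. If $|g(\hat x_i)|<\epsilon$ for all $i=1,\dots,P$, then for all $x\in[0,1/(1+c)]$, $$|g(x)|\le D\,(\log(P+1)+1)\left(\epsilon+\frac{\zeta^{-P}}{\zeta-1}\right),$$ where $\zeta=c+1+\sqrt{c^2+2c}$ and $D$ is a constant depending only on $a$, $c$ and $C$. *)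

(* Defs.v *)
From Stdlib Require Import Reals Lra Lia.
From Coquelicot Require Import Coquelicot.
Open Scope R_scope.

Definition cheb_node (c : R) (P i : nat) : R :=
  (1 + cos ((2 * INR i - 1) * PI / (2 * INR P))) / (2 * (1 + c)).

Definition zeta (c : R) : R := c + 1 + sqrt (c ^ 2 + 2 * c).

(* Main.v *)
Require Import Defs.
From Stdlib Require Import Reals Lra Lia List.
From Coquelicot Require Import Coquelicot.
Open Scope R_scope.


Fixpoint sumR (n:nat) (f:nat->R) : R :=
  match n with O => 0 | S k => sumR k f + f k end.

Lemma sumR_ext n f g : (forall i, (i<n)%nat -> f i = g i) -> sumR n f = sumR n g.
Proof. induction n; simpl; intros H; auto. rewrite IHn by (intros; apply H; lia). rewrite H by lia. auto. Qed.

Lemma sumR_plus n f g : sumR n (fun i => f i + g i) = sumR n f + sumR n g.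
Proof. induction n; simpl; [lra|]. rewrite IHn; lra. Qed.

Lemma sumR_minus n f g : sumR n (fun i => f i - g i) = sumR n f - sumR n g.
Proof. induction n; simpl; [lra|]. rewrite IHn; lra. Qed.

Lemma sumR_scal n c f : sumR n (fun i => c * f i) = c * sumR n f.
Proof. induction n; simpl; [lra|]. rewrite IHn; lra. Qed.

Lemma sumR_abs n f : Rabs (sumR n f) <= sumR n (fun i => Rabs (f i)).
Proof. induction n; simpl. rewrite Rabs_R0; lra.
  eapply Rle_trans; [apply Rabs_triang|]. lra. Qed.

Lemma sumR_le n f g : (forall i, (i<n)%nat -> f i <= g i) -> sumR n f <= sumR n g.
Proof. induction n; simpl; intros H; [lra|].
  assert (f n <= g n) by (apply H; lia). assert (sumR n f <= sumR n g) by (apply IHn; intros; apply H; lia). lra. Qed.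

Lemma sumR_swap n m f : sumR n (fun i => sumR m (fun k => f i k)) = sumR m (fun k => sumR n (fun i => f i k)).
Proof. induction n; simpl.
  - induction m; simpl; lra.
  - rewrite IHn. rewrite <- sumR_plus. reflexivity. Qed.

Lemma sumR_tele n h : sumR n (fun i => h (S i) - h i) = h n - h O.
Proof. induction n; simpl; [lra|]. rewrite IHn; lra. Qed.

Lemma sumR_single n i0 f : (i0<n)%nat -> (forall i, (i<n)%nat -> i<>i0 -> f i = 0) -> sumR n f = f i0.
Proof. induction n; intros H1 H2; [lia|]. simpl. destruct (Nat.eq_dec i0 n).
  - subst. rewrite (sumR_ext n f (fun _ => 0)). 2:{ intros; apply H2; lia. }
    clear. induction n; simpl; lra.
  - rewrite IHn by (try lia; intros; apply H2; lia). rewrite (H2 n) by lia. lra. Qed.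

Lemma sumR_zero n : sumR n (fun _ => 0) = 0.
Proof. induction n; simpl; lra. Qed.

Lemma sumR_nonneg n f : (forall i, (i<n)%nat -> 0 <= f i) -> 0 <= sumR n f.
Proof. intros H. replace 0 with (sumR n (fun _ => 0)). apply sumR_le; auto.
  clear. induction n; simpl; lra. Qed.

Definition th (P i : nat) : R := (2 * INR i + 1) * PI / (2 * INR P).
Definition rr (c : R) : R := / (1 + c).
Definition X (c t : R) : R := rr c * (1 + cos t) / 2.

Lemma node_eq c P i : (1 <= P)%nat -> 1 + c <> 0 -> cheb_node c P (S i) = X c (th P i).
Proof. intros HP Hc. unfold cheb_node, X, th, rr. rewrite S_INR.
  replace ((2 * (INR i + 1) - 1)) with (2 * INR i + 1) by ring.
  assert (0 < INR P) by (apply lt_0_INR; lia). field. lra. Qed.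

Definition Kmat (P : nat) (t s : R) : R :=
  (1 + 2 * sumR (P-1) (fun m => cos (INR (S m) * t) * cos (INR (S m) * s))) / INR P.
Definition J (P : nat) (f : R -> R) (t : R) : R :=
  sumR P (fun i => f (th P i) * Kmat P t (th P i)).
Definition Lam (P : nat) (t : R) : R := sumR P (fun i => Rabs (Kmat P t (th P i))).

Lemma J_bound P f t M : (forall i, (i<P)%nat -> Rabs (f (th P i)) <= M) ->
  Rabs (J P f t) <= M * Lam P t.
Proof. intros H. unfold J, Lam. eapply Rle_trans; [apply sumR_abs|].
  rewrite <- sumR_scal. apply sumR_le. intros i Hi. rewrite Rabs_mult.
  apply Rmult_le_compat_r; [apply Rabs_pos| auto]. Qed.

Lemma Lam_nonneg P t : 0 <= Lam P t.
Proof. apply sumR_nonneg. intros; apply Rabs_pos. Qed.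

Lemma J_plus P f g t : J P (fun s => f s + g s) t = J P f t + J P g t.
Proof. unfold J. rewrite <- sumR_plus. apply sumR_ext; intros; ring. Qed.
Lemma J_minus P f g t : J P (fun s => f s - g s) t = J P f t - J P g t.
Proof. unfold J. rewrite <- sumR_minus. apply sumR_ext; intros; ring. Qed.
Lemma J_scal P a f t : J P (fun s => a * f s) t = a * J P f t.
Proof. unfold J. rewrite <- sumR_scal. apply sumR_ext; intros; ring. Qed.
Lemma J_zero P t : J P (fun _ => 0) t = 0.
Proof. unfold J. rewrite (sumR_ext _ _ (fun _ => 0)) by (intros; ring). apply sumR_zero. Qed.

Definition Sn (P : nat) (x : R) : R := sumR P (fun i => cos (x * th P i)).

Lemma sin_nPI l : sin (INR l * PI) = 0.
Proof. induction l. simpl. rewrite Rmult_0_l; apply sin_0.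
  rewrite S_INR. replace ((INR l + 1) * PI) with (INR l * PI + PI) by ring.
  rewrite sin_plus, IHl, sin_PI. ring. Qed.

Lemma Sn_zero P l : (0 < l < 2*P)%nat -> Sn P (INR l) = 0.
Proof. intros H. assert (HP: 0 < INR P) by (apply lt_0_INR; lia).
  set (a := INR l * PI / (2 * INR P)).
  assert (Ha: 0 < a < PI).
  { unfold a. assert (0 < INR l) by (apply lt_0_INR; lia).
    assert (INR l < 2 * INR P).
    { assert (INR l < INR (2*P)) by (apply lt_INR; lia). rewrite mult_INR in H1. simpl in H1. lra. }
    pose proof PI_RGT_0. split. apply Rdiv_lt_0_compat; nra.
    apply Rmult_lt_reg_r with (2 * INR P); [lra|]. unfold Rdiv. rewrite Rmult_assoc, Rinv_l by lra. nra. }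
  assert (Hs: sin a <> 0) by (pose proof (sin_gt_0 a (proj1 Ha) (proj2 Ha)); lra).
  apply (Rmult_eq_reg_l (2 * sin a)); [|lra]. rewrite Rmult_0_r.
  unfold Sn. rewrite <- sumR_scal.
  rewrite (sumR_ext _ _ (fun i => sin (2 * INR (S i) * a) - sin (2 * INR i * a))).
  2:{ intros i Hi. rewrite S_INR. 
      replace (INR l * th P i) with ((2 * INR i + 1) * a) by (unfold th, a; field; lra).
      replace (2 * (INR i + 1) * a) with ((2 * INR i + 1) * a + a) by ring.
      replace (2 * INR i * a) with ((2 * INR i + 1) * a - a) by ring.
      rewrite sin_plus, sin_minus. ring. }
  rewrite (sumR_tele P (fun i => sin (2 * INR i * a))). simpl.
  replace (2 * INR P * a) with (INR l * PI) by (unfold a; field; lra).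
  rewrite sin_nPI. rewrite Rmult_0_r, Rmult_0_l, sin_0. ring. Qed.

Lemma Sn_0 P : Sn P 0 = INR P.
Proof. unfold Sn. induction P. simpl; auto.
  rewrite S_INR. simpl. rewrite Rmult_0_l, cos_0. 
  rewrite (sumR_ext _ _ (fun _ => 1)). 2:{ intros; rewrite Rmult_0_l; apply cos_0. }
  f_equal. clear. induction P; simpl; auto. rewrite IHP. destruct P; simpl; lra. Qed.

Lemma Sn_opp P x : Sn P (-x) = Sn P x.
Proof. unfold Sn. apply sumR_ext. intros. rewrite Ropp_mult_distr_l_reverse, cos_neg. auto. Qed.

Lemma J_ext_fun P f g t : (forall s, f s = g s) -> J P f t = J P g t.
Proof. intros H. unfold J. apply sumR_ext. intros; rewrite H; auto. Qed.


Lemma prod_cos a b : cos a * cos b = (cos (a - b) + cos (a + b)) / 2.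
Proof. rewrite cos_minus, cos_plus. field. Qed.

Lemma Amat P k m : sumR P (fun i => cos (INR k * th P i) * cos (INR m * th P i))
  = (Sn P (INR k - INR m) + Sn P (INR k + INR m)) / 2.
Proof. unfold Sn. rewrite <- sumR_plus. 
  replace (sumR P (fun i => cos ((INR k - INR m) * th P i) + cos ((INR k + INR m) * th P i)) / 2)
   with ((/2) * sumR P (fun i => cos ((INR k - INR m) * th P i) + cos ((INR k + INR m) * th P i))) by (unfold Rdiv; ring).
  rewrite <- sumR_scal. apply sumR_ext. intros. rewrite prod_cos.
  replace ((INR k - INR m) * th P i) with (INR k * th P i - INR m * th P i) by ring.
  replace ((INR k + INR m) * th P i) with (INR k * th P i + INR m * th P i) by ring. field. Qed.

Lemma Sn_diff P k m : (k < P)%nat -> (m < P)%nat -> k <> m -> Sn P (INR k - INR m) = 0.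
Proof. intros. destruct (Compare_dec.le_lt_dec m k).
  - rewrite <- minus_INR by lia. apply Sn_zero. lia.
  - replace (INR k - INR m) with (- (INR m - INR k)) by ring. rewrite Sn_opp.
    rewrite <- minus_INR by lia. apply Sn_zero. lia. Qed.

Lemma J_cos P k t : (1 <= P)%nat -> (k < P)%nat ->
  J P (fun s => cos (INR k * s)) t = cos (INR k * t).
Proof. intros HP Hk. assert (HP0: 0 < INR P) by (apply lt_0_INR; lia).
  unfold J, Kmat.
  rewrite (sumR_ext _ _ (fun i => / INR P * (cos (INR k * th P i) + 2 *
      sumR (P-1) (fun m => cos (INR (S m) * t) * (cos (INR k * th P i) * cos (INR (S m) * th P i)))))).
  2:{ intros i Hi. unfold Rdiv. rewrite <- !sumR_scal. idtac.
      set (cc := cos (INR k * th P i)).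
      rewrite (sumR_ext _ (fun i0 => 2 * (cos (INR (S i0) * t) * (cc * cos (INR (S i0) * th P i))))
        (fun i0 => cc * (2 * (cos (INR (S i0) * t) * cos (INR (S i0) * th P i))))) by (intros; ring).
      rewrite (sumR_scal _ cc). ring. }
  rewrite sumR_scal, sumR_plus, sumR_scal, sumR_swap.
  rewrite (sumR_ext (P-1) _ (fun m => cos (INR (S m) * t) * sumR P (fun i => cos (INR k * th P i) * cos (INR (S m) * th P i)))).
  2:{ intros. rewrite <- sumR_scal. auto. }
  rewrite (sumR_ext (P-1) _ (fun m => cos (INR (S m) * t) * ((Sn P (INR k - INR (S m)) + Sn P (INR k + INR (S m))) / 2))).
  2:{ intros. rewrite Amat. auto. }
  fold (Sn P (INR k)).
  destruct k as [|k].
  - change (INR 0) with 0. rewrite Sn_0. rewrite Rmult_0_l, cos_0.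
    rewrite (sumR_ext _ _ (fun _ => 0)). rewrite sumR_zero. field. lra.
    intros m Hm. rewrite Rminus_0_l, Sn_opp, Rplus_0_l. rewrite Sn_zero by lia. lra.
  - rewrite Sn_zero by lia.
    rewrite (sumR_single (P-1) k). 2: lia.
    + rewrite Rminus_diag, Sn_0, <- plus_INR, Sn_zero by lia. field. lra.
    + intros m Hm Hmk. rewrite Sn_diff by lia. rewrite <- plus_INR, Sn_zero by lia. lra.
Qed.


Fixpoint ev (L : list (nat * R)) (t : R) : R :=
  match L with nil => 0 | (l, a) :: L' => a * cos (INR l * t) + ev L' t end.

Definition pl (l : nat) : nat := match l with O => 1%nat | S k => k end.

Fixpoint mulh (L : list (nat * R)) : list (nat * R) :=
  match L with nil => nil
  | (l, a) :: L' => (l, a/2) :: (S l, a/4) :: (pl l, a/4) :: mulh L' end.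

Lemma cos_pl l t : cos (INR (S l) * t) + cos (INR (pl l) * t) = 2 * cos (INR l * t) * cos t.
Proof. destruct l as [|k]; simpl pl.
  - change (INR 1) with 1. change (INR 0) with 0. rewrite Rmult_0_l, cos_0, Rmult_1_l. ring.
  - rewrite !S_INR. replace ((INR k + 1 + 1) * t) with ((INR k + 1) * t + t) by ring.
    replace (INR k * t) with ((INR k + 1) * t - t) by ring. rewrite cos_plus, cos_minus. ring. Qed.

Lemma ev_mulh L t : ev (mulh L) t = ev L t * ((1 + cos t) / 2).
Proof. induction L as [|[l a] L IH]; cbn [ev mulh]. lra. rewrite IH.
  pose proof (cos_pl l t) as H.
  transitivity (a / 2 * cos (INR l * t) + a / 4 * (cos (INR (S l) * t) + cos (INR (pl l) * t)) + ev L t * ((1 + cos t) / 2)).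
  lra. rewrite H. set (cc := cos (INR l * t)). set (E := ev L t). set (ct := cos t). clear. field. Qed.

Definition Ln (n : nat) : list (nat * R) := Nat.iter n mulh ((O, 1) :: nil).

Lemma ev_Ln n t : ev (Ln n) t = ((1 + cos t) / 2) ^ n.
Proof. induction n; simpl. change (INR 0) with 0. rewrite Rmult_0_l, cos_0. ring.
  fold (Ln n). rewrite ev_mulh, IHn. ring. Qed.

Definition om (mu : R) (l : nat) : R := exp (mu * INR l) + exp (- (mu * INR l)).

Fixpoint NN (mu : R) (L : list (nat * R)) : R :=
  match L with nil => 0 | (l, a) :: L' => Rabs a * om mu l + NN mu L' end.

Definition wp (mu : R) : R := (2 + exp mu + exp (- mu)) / 4.

Lemma om_pl mu l : om mu (S l) + om mu (pl l) = (exp mu + exp (-mu)) * om mu l.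
Proof. unfold om. destruct l as [|k]; simpl pl.
  - change (INR 1) with 1. change (INR 0) with 0. rewrite Rmult_0_r, Ropp_0, exp_0, Rmult_1_r. ring.
  - rewrite !S_INR.
    replace (mu * (INR k + 1 + 1)) with (mu * (INR k + 1) + mu) by ring.
    replace (mu * INR k) with (mu * (INR k + 1) + - mu) by ring.
    replace (- (mu * (INR k + 1) + mu)) with (- (mu * (INR k + 1)) + - mu) by ring.
    replace (- (mu * (INR k + 1) + - mu)) with (- (mu * (INR k + 1)) + mu) by ring.
    rewrite !exp_plus. ring. Qed.

Lemma NN_mulh mu L : NN mu (mulh L) = wp mu * NN mu L.
Proof. induction L as [|[l a] L IH]; cbn [NN mulh]. unfold wp; lra. rewrite IH.
  pose proof (om_pl mu l). unfold Rdiv. rewrite !Rabs_mult.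
  rewrite (Rabs_right (/2)) by lra. rewrite (Rabs_right (/4)) by lra.
  unfold wp. nra. Qed.

Lemma NN_Ln mu n : NN mu (Ln n) = 2 * wp mu ^ n.
Proof. induction n; simpl. unfold om. change (INR 0) with 0. rewrite Rmult_0_r, Ropp_0, exp_0, Rabs_R1. ring.
  fold (Ln n). rewrite NN_mulh, IHn. ring. Qed.

Definition low (P : nat) (L : list (nat * R)) := filter (fun p => Nat.ltb (fst p) P) L.
Definition high (P : nat) (L : list (nat * R)) := filter (fun p => negb (Nat.ltb (fst p) P)) L.

Lemma ev_split P L t : ev L t = ev (low P L) t + ev (high P L) t.
Proof. induction L as [|[l a] L IH]; simpl. lra. unfold low, high in *. simpl.
  destruct (Nat.ltb l P); simpl; rewrite IH; ring. Qed.

Lemma J_ev_low P L t : (1 <= P)%nat -> J P (ev (low P L)) t = ev (low P L) t.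
Proof. intros HP. induction L as [|[l a] L IH]; unfold low in *; simpl.
  - apply J_zero.
  - destruct (Nat.ltb l P) eqn:E; simpl; auto.
    rewrite J_plus, J_scal, IH. rewrite J_cos; auto. apply Nat.ltb_lt; auto. Qed.

Lemma exp_mono x y : x <= y -> exp x <= exp y.
Proof. intros [H|H]. left; apply exp_increasing; auto. subst; lra. Qed.

Lemma om_ge mu l : 0 < mu -> exp (mu * INR l) <= om mu l.
Proof. unfold om. intros. pose proof (exp_pos (- (mu * INR l))). lra. Qed.

Lemma NN_nonneg mu L : 0 <= NN mu L.
Proof. induction L as [|[l a] L IH]; simpl. lra.
  assert (0 <= om mu l) by (unfold om; pose proof (exp_pos (mu * INR l)); pose proof (exp_pos (- (mu * INR l))); lra).
  pose proof (Rabs_pos a). nra. Qed.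

Lemma high_bound mu P L t : 0 < mu ->
  Rabs (ev (high P L) t) <= exp (- (mu * INR P)) * NN mu L.
Proof. intros Hmu. induction L as [|[l a] L IH]; unfold high in *; simpl.
  - rewrite Rabs_R0. lra.
  - assert (Hom: 0 <= om mu l) by (unfold om; pose proof (exp_pos (mu * INR l)); pose proof (exp_pos (- (mu * INR l))); lra).
    assert (He: 0 < exp (- (mu * INR P))) by apply exp_pos.
    destruct (Nat.ltb l P) eqn:E; simpl.
    + assert (0 <= exp (- (mu * INR P)) * (Rabs a * om mu l)).
      { apply Rmult_le_pos. lra. apply Rmult_le_pos; auto using Rabs_pos. }
      lra.
    + eapply Rle_trans; [apply Rabs_triang|]. rewrite Rabs_mult.
      assert (Rabs (cos (INR l * t)) <= 1) by (apply Rabs_le; apply COS_bound).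
      assert (exp (- (mu * INR P)) * om mu l >= 1).
      { apply Nat.ltb_ge in E. apply le_INR in E.
        pose proof (om_ge mu l Hmu). 
        assert (exp (- (mu * INR P)) * exp (mu * INR l) >= 1).
        { rewrite <- exp_plus. replace 1 with (exp 0) by apply exp_0.
          apply Rle_ge. apply exp_mono; nra. }
        nra. }
      pose proof (Rabs_pos a). pose proof (Rabs_pos (cos (INR l * t))). nra. Qed.

Lemma interp_err mu P L t : 0 < mu -> (1 <= P)%nat ->
  Rabs (ev L t - J P (ev L) t) <= (1 + Lam P t) * (exp (- (mu * INR P)) * NN mu L).
Proof. intros Hmu HP.
  assert (E: ev L t - J P (ev L) t = ev (high P L) t - J P (ev (high P L)) t).
  { rewrite (J_ext_fun P (ev L) (fun s => ev (low P L) s + ev (high P L) s)).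
    rewrite J_plus, J_ev_low by auto. rewrite (ev_split P L t). ring. intros; apply ev_split. }
  rewrite E. eapply Rle_trans; [apply Rabs_triang|]. rewrite Rabs_Ropp.
  pose proof (high_bound mu P L t Hmu).
  pose proof (J_bound P (ev (high P L)) t (exp (- (mu * INR P)) * NN mu L) (fun i _ => high_bound mu P L _ Hmu)).
  lra. Qed.


Definition Dk (P : nat) (p : R) : R := 1 + 2 * sumR (P-1) (fun m => cos (INR (S m) * p)).

Lemma Kmat_Dk P t s : (1 <= P)%nat -> Kmat P t s = (Dk P (t - s) + Dk P (t + s)) / (2 * INR P).
Proof. intros HP. assert (0 < INR P) by (apply lt_0_INR; lia). unfold Kmat, Dk.
  replace (1 + 2 * sumR (P - 1) (fun m => cos (INR (S m) * (t - s))) +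
    (1 + 2 * sumR (P - 1) (fun m => cos (INR (S m) * (t + s)))))
  with (2 * (1 + sumR (P - 1) (fun m => cos (INR (S m) * (t - s)) + cos (INR (S m) * (t + s))))).
  2:{ rewrite sumR_plus. ring. }
  rewrite (sumR_ext _ (fun m => cos (INR (S m) * (t - s)) + cos (INR (S m) * (t + s))) (fun m => 2 * (cos (INR (S m) * t) * cos (INR (S m) * s)))).
  2:{ intros. replace (INR (S i) * (t - s)) with (INR (S i) * t - INR (S i) * s) by ring.
      replace (INR (S i) * (t + s)) with (INR (S i) * t + INR (S i) * s) by ring.
      rewrite cos_minus, cos_plus. ring. }
  rewrite sumR_scal. field. lra. Qed.

Lemma Dk_sin P p : (1 <= P)%nat -> Dk P p * sin (p / 2) = sin ((INR P - 1/2) * p).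
Proof. intros HP. unfold Dk.
  replace ((1 + 2 * sumR (P - 1) (fun m => cos (INR (S m) * p))) * sin (p / 2))
    with (sin (p/2) + sumR (P-1) (fun m => (2 * sin (p/2)) * cos (INR (S m) * p))) by (rewrite sumR_scal; ring).
  rewrite (sumR_ext _ _ (fun m => (fun i => sin ((INR i + 1/2) * p)) (S m) - (fun i => sin ((INR i + 1/2) * p)) m)).
  2:{ intros. cbv beta. rewrite S_INR.
      replace ((INR i + 1 + 1/2) * p) with ((INR i + 1) * p + p/2) by field.
      replace ((INR i + 1/2) * p) with ((INR i + 1) * p - p/2) by field.
      rewrite sin_plus, sin_minus. ring. }
  rewrite (sumR_tele (P-1) (fun i => sin ((INR i + 1/2) * p))). simpl. rewrite minus_INR by lia. simpl INR.
  replace ((0 + 1/2) * p) with (p/2) by field.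
  replace ((INR P - 1 + 1/2) * p) with ((INR P - 1/2) * p) by field. ring. Qed.

Lemma Dk_abs1 P p : (1 <= P)%nat -> Rabs (Dk P p) * Rabs (sin (p / 2)) <= 1.
Proof. intros. rewrite <- Rabs_mult, Dk_sin by auto. apply Rabs_le. apply SIN_bound. Qed.

Lemma Dk_abs2 P p : (1 <= P)%nat -> Rabs (Dk P p) <= 2 * INR P.
Proof. intros HP. unfold Dk. eapply Rle_trans; [apply Rabs_triang|]. rewrite Rabs_R1, Rabs_mult, Rabs_right by lra.
  assert (Rabs (sumR (P - 1) (fun m => cos (INR (S m) * p))) <= INR (P-1)).
  { eapply Rle_trans; [apply sumR_abs|]. 
    replace (INR (P-1)) with (sumR (P-1) (fun _ => 1)).
    apply sumR_le. intros. apply Rabs_le. apply COS_bound.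
    clear. induction (P-1)%nat. auto. simpl sumR. rewrite IHn, S_INR. auto. }
  rewrite minus_INR in H by lia. change (INR 1) with 1 in H. lra. Qed.

Lemma sin_lb_eq y : sin_lb y = y - y^3/6 + y^5/120 - y^7/5040.
Proof. unfold sin_lb, sin_approx, sin_term. cbn [sum_f_R0]. rewrite !INR_IZR_INZ. simpl. field. Qed.

Lemma sin_lb3 y : 0 <= y <= PI/2 -> y/3 <= sin y.
Proof. intros [H1 H2]. pose proof PI_4. pose proof (SIN y H1 ltac:(lra)) as [Hs _].
  rewrite sin_lb_eq in Hs. assert (y <= 2) by lra.
  assert (z: 0 <= y*y <= 4) by nra.
  assert (y/3 <= y - y^3/6 + y^5/120 - y^7/5040).
  { assert (y - y^3/6 + y^5/120 - y^7/5040 - y/3 = y * ((2/3 - y*y/6) + (y*y)*(y*y)*(42 - y*y)/5040)) by (simpl; field).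
    assert (0 <= y * ((2/3 - y*y/6) + (y*y)*(y*y)*(42 - y*y)/5040)).
    { apply Rmult_le_pos; auto. assert (0 <= (y*y)*(y*y)*(42 - y*y)) by (apply Rmult_le_pos; nra). lra. }
    lra. }
  lra. Qed.

Lemma sin_half_minus t s : 0 <= t <= PI -> 0 <= s <= PI -> Rabs (t - s) / 6 <= Rabs (sin ((t - s) / 2)).
Proof. intros Ht Hs. destruct (Rle_dec 0 (t - s)).
  - rewrite Rabs_right by lra. pose proof (sin_lb3 ((t-s)/2) ltac:(lra)).
    rewrite Rabs_right by lra. lra.
  - rewrite Rabs_left by lra. replace ((t - s)/2) with (- ((s - t)/2)) by field. rewrite sin_neg.
    pose proof (sin_lb3 ((s-t)/2) ltac:(lra)). rewrite Rabs_Ropp, Rabs_right by lra. lra. Qed.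

Lemma sin_half_plus t s : 0 <= t <= PI -> 0 <= s <= PI -> Rabs (t - s) / 6 <= Rabs (sin ((t + s) / 2)).
Proof. intros Ht Hs. destruct (Rle_dec ((t+s)/2) (PI/2)).
  - pose proof (sin_lb3 ((t+s)/2) ltac:(lra)). rewrite (Rabs_right (sin _)) by lra.
    assert (Rabs (t - s) <= t + s) by (apply Rabs_le; lra). lra.
  - replace ((t+s)/2) with (PI - (2*PI - t - s)/2) by field. rewrite sin_PI_x.
    pose proof (sin_lb3 ((2*PI - t - s)/2) ltac:(lra)). rewrite (Rabs_right (sin _)) by lra.
    assert (Rabs (t - s) <= 2*PI - t - s) by (apply Rabs_le; lra). lra. Qed.

Lemma Kmat_bound P t s : (1 <= P)%nat -> 0 <= t <= PI -> 0 <= s <= PI ->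
  Rabs (Kmat P t s) <= 4 / (1 + Rabs (t - s) * INR P / PI).
Proof. intros HP Ht Hs. assert (HP0: 1 <= INR P) by (apply (le_INR 1); lia).
  pose proof PI2_3_2. set (d := Rabs (t - s)). assert (Hd: 0 <= d) by apply Rabs_pos.
  set (s' := d * INR P / PI). assert (0 <= s') by (unfold s'; apply Rmult_le_pos; [nra| apply Rlt_le, Rinv_0_lt_compat; lra]).
  rewrite Kmat_Dk by auto. unfold Rdiv at 1. rewrite Rabs_mult, Rabs_right with (r := / (2 * INR P)).
  2: apply Rle_ge, Rlt_le, Rinv_0_lt_compat; lra.
  assert (Htr: Rabs (Dk P (t - s) + Dk P (t + s)) <= Rabs (Dk P (t - s)) + Rabs (Dk P (t + s))) by apply Rabs_triang.
  destruct (Rle_dec s' 1).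
  - pose proof (Dk_abs2 P (t - s) HP). pose proof (Dk_abs2 P (t + s) HP).
    apply Rle_trans with 2.
    + apply Rmult_le_reg_l with (2 * INR P). lra. rewrite <- Rmult_assoc, Rinv_r_simpl_m by lra. lra.
    + apply Rmult_le_reg_l with (1 + s'). lra. replace ((1+s')*(4/(1+s'))) with 4 by (field; lra). lra.
  - assert (Hdp: 0 < d). { destruct (Rle_lt_dec d 0); auto. assert (d = 0) by lra. unfold s' in n. rewrite H1 in n. lra. }
    pose proof (Dk_abs1 P (t - s) HP). pose proof (Dk_abs1 P (t + s) HP).
    pose proof (sin_half_minus t s Ht Hs). pose proof (sin_half_plus t s Ht Hs). fold d in H3, H4.
    assert (Rabs (Dk P (t - s)) <= 6 / d).
    { apply Rmult_le_reg_r with (d/6). lra. field_simplify; [|lra]. 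
      pose proof (Rabs_pos (Dk P (t - s))). nra. }
    assert (Rabs (Dk P (t + s)) <= 6 / d).
    { apply Rmult_le_reg_r with (d/6). lra. field_simplify; [|lra]. 
      pose proof (Rabs_pos (Dk P (t + s))). nra. }
    assert (E: d = s' * PI / INR P) by (unfold s'; field; lra).
    apply Rle_trans with (12 / d * / (2 * INR P)).
    + apply Rmult_le_compat_r. apply Rlt_le, Rinv_0_lt_compat; lra. unfold Rdiv in *. lra.
    + rewrite E. apply Rmult_le_reg_l with (1 + s'). lra.
      apply Rmult_le_reg_l with (s' * PI). nra.
      field_simplify; try lra. nra. Qed.

Definition G (y : R) : R := if Rle_dec 0 y then ln (1 + y) else - ln (1 - y).

Lemma ln_diff A B : 0 < A -> 0 < B -> 1 - B / A <= ln A - ln B.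
Proof. intros. pose proof (exp_ineq1_le (ln (B / A))). rewrite exp_ln in H1 by (apply Rdiv_lt_0_compat; auto).
  rewrite ln_div in H1 by auto. lra. Qed.

Lemma ln2_half : 1/2 <= ln 2.
Proof. pose proof (ln_diff 2 1 ltac:(lra) ltac:(lra)). rewrite ln_1 in H. lra. Qed.

Lemma inv_le2 a b : 0 < a -> 0 < b -> b <= 2 * a -> 1 / a <= 2 * (1 / b).
Proof. intros. apply Rmult_le_reg_l with (a*b). nra.
  replace (a * b * (1 / a)) with b by (field; lra). replace (a * b * (2 * (1 / b))) with (2 * a) by (field; lra). lra. Qed.

Lemma Gstep y : 1 / (1 + Rabs y) <= 2 * (G (y + 1/2) - G (y - 1/2)).
Proof. unfold G. destruct (Rle_dec 0 (y + 1/2)); destruct (Rle_dec 0 (y - 1/2)).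
  - rewrite Rabs_right by lra.
    pose proof (ln_diff (1 + (y + 1/2)) (1 + (y - 1/2)) ltac:(lra) ltac:(lra)).
    assert (1 / (1 + y) <= 2 * (1 - (1 + (y - 1/2)) / (1 + (y + 1/2)))).
    { replace (1 - (1 + (y - 1/2)) / (1 + (y + 1/2))) with (1 / (y + 3/2)) by (field; lra).
      apply inv_le2; lra. }
    lra.
  - assert (Hl: ln 2 <= ln (1 + (y + 1/2)) + ln (1 - (y - 1/2))).
    { rewrite <- ln_mult by lra. apply ln_le. lra. nra. }
    pose proof ln2_half.
    assert (1 / (1 + Rabs y) <= 1).
    { pose proof (Rabs_pos y). apply Rmult_le_reg_l with (1 + Rabs y). lra.
      replace ((1 + Rabs y) * (1 / (1 + Rabs y))) with 1 by (field; lra). lra. }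
    lra.
  - lra.
  - rewrite Rabs_left by lra.
    pose proof (ln_diff (1 - (y - 1/2)) (1 - (y + 1/2)) ltac:(lra) ltac:(lra)).
    assert (1 / (1 + - y) <= 2 * (1 - (1 - (y + 1/2)) / (1 - (y - 1/2)))).
    { replace (1 - (1 - (y + 1/2)) / (1 - (y - 1/2))) with (1 / (3/2 - y)) by (field; lra).
      apply inv_le2; lra. }
    lra. Qed.

Lemma harm_bound P tau : 0 <= tau <= INR P ->
  sumR P (fun i => 1 / (1 + Rabs (tau - (INR i + 1/2)))) <= 4 * ln (1 + INR P).
Proof. intros Ht.
  apply Rle_trans with (sumR P (fun i => 2 * ((fun j => - G (tau - INR j)) (S i) - (fun j => - G (tau - INR j)) i))).
  { apply sumR_le. intros i _. cbv beta. rewrite S_INR.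
    pose proof (Gstep (tau - (INR i + 1/2))).
    replace (tau - (INR i + 1/2) + 1/2) with (tau - INR i) in H by field.
    replace (tau - (INR i + 1/2) - 1/2) with (tau - (INR i + 1)) in H by field. lra. }
  rewrite sumR_scal, (sumR_tele P (fun j => - G (tau - INR j))). change (INR 0) with 0. rewrite Rminus_0_r.
  assert (G tau <= ln (1 + INR P)).
  { unfold G. destruct (Rle_dec 0 tau); [|lra]. apply ln_le; lra. }
  assert (- G (tau - INR P) <= ln (1 + INR P)).
  { unfold G. destruct (Rle_dec 0 (tau - INR P)).
    - replace (tau - INR P) with 0 by lra. rewrite Rplus_0_r, ln_1.
      assert (0 <= ln (1 + INR P)). { rewrite <- ln_1. apply ln_le; pose proof (pos_INR P); lra. } lra.
    - rewrite Ropp_involutive. apply ln_le; lra. }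
  lra. Qed.

Lemma Lam_bound P t : (1 <= P)%nat -> 0 <= t <= PI -> Lam P t <= 16 * ln (1 + INR P).
Proof. intros HP Ht. assert (HP0: 1 <= INR P) by (apply (le_INR 1); lia). pose proof PI_RGT_0.
  unfold Lam. apply Rle_trans with (sumR P (fun i => 4 * (1 / (1 + Rabs (t * INR P / PI - (INR i + 1/2)))))).
  - apply sumR_le. intros i Hi.
    assert (Hth: 0 <= th P i <= PI).
    { unfold th. assert (INR i + 1 <= INR P) by (rewrite <- S_INR; apply le_INR; lia). pose proof (pos_INR i).
      split. apply Rmult_le_pos. apply Rmult_le_pos; lra. apply Rlt_le, Rinv_0_lt_compat; lra.
      apply Rmult_le_reg_r with (2 * INR P). lra. unfold Rdiv. rewrite Rmult_assoc, Rinv_l by lra. nra. }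
    eapply Rle_trans; [apply Kmat_bound; auto|].
    replace (Rabs (t * INR P / PI - (INR i + 1/2))) with (Rabs (t - th P i) * INR P / PI).
    + unfold Rdiv; lra.
    + replace (t * INR P / PI - (INR i + 1/2)) with ((t - th P i) * (INR P / PI)) by (unfold th; field; lra).
      rewrite Rabs_mult, (Rabs_right (INR P / PI)). unfold Rdiv; ring.
      apply Rle_ge, Rlt_le, Rdiv_lt_0_compat; lra.
  - rewrite sumR_scal. assert (sumR P (fun i => 1 / (1 + Rabs (t * INR P / PI - (INR i + 1/2)))) <= 4 * ln (1 + INR P)).
    { apply harm_bound. split. apply Rmult_le_pos. nra. apply Rlt_le, Rinv_0_lt_compat; lra.
      apply Rmult_le_reg_r with PI. lra. unfold Rdiv. rewrite Rmult_assoc, Rinv_l by lra. nra. }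
    lra. Qed.


Lemma is_series_zero : is_series (fun _ : nat => 0) 0.
Proof. assert (H: Rabs (1/2) < 1) by (rewrite Rabs_right; lra).
  pose proof (is_series_scal_r 0 _ _ (is_series_geom (1/2) H)).
  rewrite Rmult_0_r in H0. eapply is_series_ext; [|apply H0]. intros; simpl; ring. Qed.

Lemma is_series_sumR P (a : nat -> nat -> R) (A k : nat -> R) :
  (forall i, (i < P)%nat -> is_series (fun n => a n i) (A i)) ->
  is_series (fun n => sumR P (fun i => a n i * k i)) (sumR P (fun i => A i * k i)).
Proof. induction P; intros H; simpl.
  - apply is_series_zero.
  - assert (H1 := IHP (fun i Hi => H i ltac:(lia))).
    assert (H2 := is_series_scal_r (k P) _ _ (H P ltac:(lia))).
    apply (is_series_plus _ _ _ _ H1 H2). Qed.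

Lemma series_bound (a b : nat -> R) (V B : R) : is_series a V -> is_series b B ->
  (forall n, Rabs (a n) <= b n) -> Rabs V <= B.
Proof. intros Ha Hb Hab.
  assert (Eb : ex_series b) by (exists B; auto).
  assert (Ea : ex_series (fun n => Rabs (a n))).
  { apply (@ex_series_le R_AbsRing R_CompleteNormedModule _ b); auto. intros n. change (norm (Rabs (a n))) with (Rabs (Rabs (a n))). rewrite Rabs_Rabsolu. apply Hab. }
  rewrite <- (is_series_unique a V Ha), <- (is_series_unique b B Hb).
  eapply Rle_trans; [apply Series_Rabs; auto|]. apply Series_le; auto.
  intros; split; [apply Rabs_pos| auto]. Qed.

Lemma exp_mono_aux x y : x <= y -> exp x <= exp y.
Proof. intros [H|H]. left; apply exp_increasing; auto. subst; lra. Qed.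

Lemma growth a w : 0 < w < 1 -> exists K, 0 < K /\ forall n : nat, (1 <= n)%nat ->
  Rpower (INR n) a * w ^ n <= K * ((1 + w) / 2) ^ n.
Proof. intros Hw. set (q := (1 + w) / (2 * w)). assert (Hq: 1 < q) by (unfold q; apply Rmult_lt_reg_r with (2*w); [lra|]; field_simplify; lra).
  set (dl := ln q). assert (Hdl: 0 < dl) by (unfold dl; rewrite <- ln_1; apply ln_increasing; lra).
  set (a' := Rmax a 1). assert (Ha': 1 <= a') by apply Rmax_r. assert (Haa: a <= a') by apply Rmax_l.
  set (K0 := - a' - a' * ln (dl / a')).
  exists (exp K0). split. apply exp_pos. intros n Hn.
  assert (Hn1: 1 <= INR n) by (apply (le_INR 1); lia).
  assert (Hln: 0 <= ln (INR n)) by (rewrite <- ln_1; apply ln_le; lra).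
  assert (Hk: a * ln (INR n) <= dl * INR n + K0).
  { assert (ln (INR n * dl / a') <= INR n * dl / a' - 1).
    { pose proof (exp_ineq1_le (ln (INR n * dl / a'))). rewrite exp_ln in H. lra.
      apply Rdiv_lt_0_compat; nra. }
    unfold Rdiv in H. rewrite Rmult_assoc, ln_mult in H. 2: lra. 2: apply Rmult_lt_0_compat; [lra| apply Rinv_0_lt_compat; lra].
    unfold K0. unfold Rdiv. 
    assert (a * ln (INR n) <= a' * ln (INR n)) by nra.
    assert (a' * (ln (INR n) + ln (dl * / a')) <= a' * (INR n * (dl * / a') - 1)) by (apply Rmult_le_compat_l; lra).
    replace (a' * (INR n * (dl * / a') - 1)) with (dl * INR n - a') in H1 by (field; lra). nra. }
  unfold Rpower. 
  replace (((1 + w) / 2) ^ n) with (q ^ n * w ^ n).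
  2:{ rewrite <- Rpow_mult_distr. f_equal. unfold q. field. lra. }
  assert (exp (a * ln (INR n)) <= exp K0 * q ^ n).
  { eapply Rle_trans. apply exp_mono_aux. apply Hk. rewrite exp_plus. rewrite Rmult_comm.
    rewrite <- (Rpower_pow n q) by lra. unfold Rpower. unfold dl. rewrite (Rmult_comm (INR n)). lra. }
  pose proof (pow_le w n ltac:(lra)). nra. Qed.


Lemma zeta_facts c : c > 0 -> 1 < zeta c /\ / zeta c = c + 1 - sqrt (c ^ 2 + 2 * c).
Proof. intros Hc. unfold zeta. assert (H0: 0 < c^2 + 2*c) by nra.
  pose proof (sqrt_lt_R0 _ H0). pose proof (sqrt_sqrt _ (Rlt_le _ _ H0)).
  split. lra. 
  assert ((c + 1 + sqrt (c ^ 2 + 2 * c)) * (c + 1 - sqrt (c ^ 2 + 2 * c)) = 1).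
  { replace ((c + 1 + sqrt (c ^ 2 + 2 * c)) * (c + 1 - sqrt (c ^ 2 + 2 * c))) with
      ((c+1)^2 - sqrt (c ^ 2 + 2 * c) * sqrt (c ^ 2 + 2 * c)) by ring. rewrite H1. ring. }
  apply (Rmult_eq_reg_l (c + 1 + sqrt (c ^ 2 + 2 * c))). rewrite H2. field. lra. lra. Qed.

Lemma X_pow c s n : X c s ^ n = rr c ^ n * ev (Ln n) s.
Proof. rewrite ev_Ln. unfold X. rewrite <- Rpow_mult_distr. f_equal. field. Qed.

Lemma X_range c s : c > 0 -> 0 <= X c s <= rr c /\ rr c < 1.
Proof. intros Hc. unfold X, rr. pose proof (COS_bound s). assert (0 < / (1 + c)) by (apply Rinv_0_lt_compat; lra).
  assert (/ (1 + c) < 1) by (rewrite <- Rinv_1; apply Rinv_lt_contravar; lra).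
  split; [split|]; try nra. Qed.

Lemma En_bound c P n t : c > 0 -> (1 <= P)%nat ->
  Rabs (X c t ^ n - J P (fun s => X c s ^ n) t) <=
  (1 + Lam P t) * (2 * / zeta c ^ P * (rr c * wp (ln (zeta c))) ^ n).
Proof. intros Hc HP. destruct (zeta_facts c Hc) as [Hz _].
  set (mu := ln (zeta c)). assert (Hmu: 0 < mu) by (unfold mu; rewrite <- ln_1; apply ln_increasing; lra).
  rewrite (J_ext_fun P _ (fun s => rr c ^ n * ev (Ln n) s)) by (intros; apply X_pow).
  rewrite J_scal, X_pow. 
  replace (rr c ^ n * ev (Ln n) t - rr c ^ n * J P (ev (Ln n)) t) with (rr c ^ n * (ev (Ln n) t - J P (ev (Ln n)) t)) by ring.
  rewrite Rabs_mult. pose proof (interp_err mu P (Ln n) t Hmu HP) as H.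
  rewrite NN_Ln in H.
  assert (E: exp (- (mu * INR P)) = / zeta c ^ P).
  { rewrite exp_Ropp. f_equal. rewrite Rmult_comm. unfold mu. rewrite <- (Rpower_pow P (zeta c)) by lra. reflexivity. }
  rewrite E in H.
  assert (Hr: 0 < rr c) by (unfold rr; apply Rinv_0_lt_compat; lra).
  rewrite (Rabs_right (rr c ^ n)) by (apply Rle_ge, pow_le; lra).
  rewrite Rpow_mult_distr.
  pose proof (pow_le (rr c) n ltac:(lra)).
  replace ((1 + Lam P t) * (2 * / zeta c ^ P * (rr c ^ n * wp mu ^ n))) with
    (rr c ^ n * ((1 + Lam P t) * (/ zeta c ^ P * (2 * wp mu ^ n)))) by ring.
  apply Rmult_le_compat_l; auto. Qed.


Theorem mainTheorem6 :
  forall a c C : R, a > -1 -> C > 0 -> c > 0 ->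
  exists D : R,
    forall (gn : nat -> R) (g : R -> R) (P : nat) (eps : R),
      gn 0%nat = 0 ->
      (forall n : nat, (1 <= n)%nat -> Rabs (gn n) <= C * Rpower (INR n) a) ->
      (forall x : R, 0 <= x < 1 -> is_series (fun n => gn n * x ^ n) (g x)) ->
      (1 <= P)%nat ->
      eps > 0 ->
      (forall i : nat, (1 <= i <= P)%nat -> Rabs (g (cheb_node c P i)) < eps) ->
      forall x : R, 0 <= x <= 1 / (1 + c) ->
        Rabs (g x) <= D * (ln (INR P + 1) + 1)
                        * (eps + / (zeta c ^ P) / (zeta c - 1)).
Proof.
  intros a c C Ha HC Hc.
  destruct (zeta_facts c Hc) as [Hz Hiz].
  set (z := zeta c) in *.
  set (mu := ln z).
  assert (Hwp: wp mu = (c + 2) / 2).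
  { unfold wp, mu. rewrite exp_Ropp, exp_ln by lra. rewrite Hiz. unfold z, zeta. field. }
  set (w := rr c * wp mu).
  assert (Hw: 0 < w < 1).
  { unfold w. rewrite Hwp. unfold rr. split. apply Rmult_lt_0_compat. apply Rinv_0_lt_compat; lra. lra.
    apply Rmult_lt_reg_l with (1 + c). lra. rewrite <- Rmult_assoc, Rinv_r by lra. lra. }
  destruct (growth a w Hw) as [K [HK HKg]].
  set (v := (1 + w) / 2).
  assert (Hv: 0 < v < 1) by (unfold v; lra).
  set (M := 2 * C * K / (1 - v)).
  assert (HM: 0 <= M) by (unfold M; apply Rlt_le, Rdiv_lt_0_compat; [nra|lra]).
  exists (17 * (1 + M * (z - 1))).
  intros gn g P eps Hg0 Hgn Hser HP Heps Hnodes x Hx.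
  assert (HP0: 1 <= INR P) by (apply (le_INR 1); lia).
  set (th0 := acos (2 * x * (1 + c) - 1)).
  assert (Hu: -1 <= 2 * x * (1 + c) - 1 <= 1).
  { destruct Hx as [Hx1 Hx2]. split. nra.
    assert (x * (1 + c) <= 1). { apply Rmult_le_reg_r with (/ (1 + c)). apply Rinv_0_lt_compat; lra.
      rewrite Rmult_assoc, Rinv_r, Rmult_1_r by lra. lra. } lra. }
  assert (Hth: 0 <= th0 <= PI) by apply acos_bound.
  assert (Hxt: X c th0 = x).
  { unfold X, th0. rewrite cos_acos by auto. unfold rr. field. lra. }
  set (Lm := Lam P th0).
  assert (HL0: 0 <= Lm) by apply Lam_nonneg.
  assert (HL: Lm <= 16 * ln (1 + INR P)) by (apply Lam_bound; auto).
  assert (S1: is_series (fun n => gn n * X c th0 ^ n) (g (X c th0))).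
  { apply Hser. destruct (X_range c th0 Hc); lra. }
  assert (S2: is_series (fun n => sumR P (fun i => (gn n * X c (th P i) ^ n) * Kmat P th0 (th P i)))
                        (J P (fun s => g (X c s)) th0)).
  { unfold J. apply (is_series_sumR P (fun n i => gn n * X c (th P i) ^ n) (fun i => g (X c (th P i)))).
    intros i Hi. apply Hser. destruct (X_range c (th P i) Hc); lra. }
  pose proof (is_series_minus _ _ _ _ S1 S2) as S3.
  assert (S4: is_series (fun n => gn n * (X c th0 ^ n - J P (fun s => X c s ^ n) th0))
                        (g (X c th0) - J P (fun s => g (X c s)) th0)).
  { eapply is_series_ext; [|apply S3]. intros n. unfold minus, plus, opp; simpl.
    rewrite Rmult_minus_distr_l. unfold J. rewrite <- sumR_scal.
    rewrite (sumR_ext P (fun i => gn n * (X c (th P i) ^ n * Kmat P th0 (th P i))) (fun i => gn n * X c (th P i) ^ n * Kmat P th0 (th P i))) by (intros; ring). ring. }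
  set (bb := fun n : nat => C * K * ((1 + Lm) * (2 * / z ^ P)) * v ^ n).
  assert (Hzp: 0 < / z ^ P) by (apply Rinv_0_lt_compat, pow_lt; lra).
  assert (Sb: is_series bb (C * K * ((1 + Lm) * (2 * / z ^ P)) * / (1 - v))).
  { unfold bb. apply (is_series_scal_l (C * K * ((1 + Lm) * (2 * / z ^ P))) (fun n => v ^ n)).
    apply is_series_geom. rewrite Rabs_right; lra. }
  assert (Hterm: forall n, Rabs (gn n * (X c th0 ^ n - J P (fun s => X c s ^ n) th0)) <= bb n).
  { intros n. unfold bb. assert (0 <= v ^ n) by (apply pow_le; lra).
    assert (0 <= C * K * ((1 + Lm) * (2 * / z ^ P))).
    { apply Rmult_le_pos. nra. apply Rmult_le_pos; lra. }
    destruct n as [|n].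
    - rewrite Hg0, Rmult_0_l, Rabs_R0. nra.
    - rewrite Rabs_mult. pose proof (En_bound c P (S n) th0 Hc HP) as HE. fold z mu w Lm in HE.
      pose proof (Hgn (S n) ltac:(lia)) as HG.
      pose proof (HKg (S n) ltac:(lia)) as HKn. fold v in HKn.
      assert (0 <= Rpower (INR (S n)) a) by (unfold Rpower; apply Rlt_le, exp_pos).
      assert (0 <= w ^ S n) by (apply pow_le; lra).
      apply Rle_trans with ((C * Rpower (INR (S n)) a) * ((1 + Lm) * (2 * / z ^ P * w ^ S n))).
      + apply Rmult_le_compat; auto using Rabs_pos.
      + replace (C * Rpower (INR (S n)) a * ((1 + Lm) * (2 * / z ^ P * w ^ S n))) with
          (C * ((1 + Lm) * (2 * / z ^ P)) * (Rpower (INR (S n)) a * w ^ S n)) by ring.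
        replace (C * K * ((1 + Lm) * (2 * / z ^ P)) * v ^ S n) with
          (C * ((1 + Lm) * (2 * / z ^ P)) * (K * v ^ S n)) by ring.
        apply Rmult_le_compat_l; auto. apply Rmult_le_pos. lra. apply Rmult_le_pos; lra. }
  pose proof (series_bound _ _ _ _ S4 Sb Hterm) as Herr.
  assert (HJ: Rabs (J P (fun s => g (X c s)) th0) <= eps * Lm).
  { apply J_bound. intros i Hi. rewrite <- node_eq by (auto; lra). left. apply Hnodes. lia. }
  rewrite <- Hxt.
  assert (Hg: Rabs (g (X c th0)) <= eps * Lm + (1 + Lm) * M * / z ^ P).
  { replace (g (X c th0)) with ((g (X c th0) - J P (fun s => g (X c s)) th0) + J P (fun s => g (X c s)) th0) by ring.
    eapply Rle_trans; [apply Rabs_triang|].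
    replace ((1 + Lm) * M * / z ^ P) with (C * K * ((1 + Lm) * (2 * / z ^ P)) * / (1 - v)) by (unfold M; field; repeat split; try lra; apply pow_nonzero; lra).
    lra. }
  set (LL := ln (INR P + 1) + 1).
  assert (HLL: 1 <= LL).
  { unfold LL. assert (0 <= ln (INR P + 1)) by (rewrite <- ln_1; apply ln_le; lra). lra. }
  assert (HL': Lm <= 16 * LL) by (unfold LL; rewrite Rplus_comm with (r1 := INR P); lra).
  assert (Hzz: 0 < z - 1) by lra.
  replace (/ z ^ P) with ((z - 1) * (/ z ^ P / (z - 1))) in Hg by (field; split; try lra; apply pow_nonzero; lra).
  assert (Hq: 0 < / z ^ P / (z - 1)) by (apply Rdiv_lt_0_compat; lra).
  set (q := / z ^ P / (z - 1)) in *.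
  assert (eps * Lm <= 17 * LL * eps) by nra.
  assert ((1 + Lm) * M * ((z - 1) * q) <= 17 * LL * (M * (z - 1)) * q).
  { assert (1 + Lm <= 17 * LL) by lra.
    assert (0 <= M * ((z - 1) * q)) by (apply Rmult_le_pos; [lra| apply Rmult_le_pos; lra]).
    replace ((1 + Lm) * M * ((z - 1) * q)) with ((1 + Lm) * (M * ((z - 1) * q))) by ring.
    replace (17 * LL * (M * (z - 1)) * q) with ((17 * LL) * (M * ((z - 1) * q))) by ring.
    apply Rmult_le_compat_r; lra. }
  assert (0 <= M * (z - 1)) by nra.
  assert (0 <= 17 * LL * q) by nra.
  assert (0 <= 17 * LL * (M * (z-1)) * eps) by (apply Rmult_le_pos; nra).
  replace (17 * (1 + M * (z - 1)) * LL * (eps + q)) with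
    (17 * LL * eps + 17 * LL * (M * (z - 1)) * q + (17 * LL * q + 17 * LL * (M * (z-1)) * eps)) by ring.
  lra.
Qed.
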